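(* Consider the noisy Hegselmann–Krause model with homogeneously stubborn agents described in the context, with $n\ge 1$ regular agents, a nonempty set $\mathcal{B}_1$ of stubborn agents with common constant opinion $B_1\in[0,1]$, and confidence bound $\epsilon\in(0,1]$. For every initial condition $x(0)\in[0,1]^n$ and every noise bound $\delta\in\left(0,\frac{\epsilon}{2(n+1)}\right)$, almost surely $$d_{\mathcal{V}}:=\limsup_{t\to\infty}\max_{i,j\in\mathcal{V}}|x_i(t)-x_j(t)|\le 2\delta \quad\text{and}\quad d_{\mathcal{V}}^{B_1}:=\limsup_{t\to\infty}\max_{i\in\mathcal{V}}|x_i(t)-B_1|\le (n+1)\delta .$$
   Context: Regular agents: $\mathcal{V}=\{1,\dots,n\}$, with opinions $x_i(t)\in[0,1]$, $t=0,1,2,\dots$. Stubborn agents: a finite nonempty index set $\mathcal{B}_1$ disjoint from $\mathcal{V}$, with $x_k(t)\equiv B_1$ for all $k\in\mathcal{B}_1$ and all $t\ge0$, where $B_1\in[0,1]$ is fixed. For $i\in\mathcal{V}$, the neighbor set is $\mathcal{N}(i,x(t))=\{j\in\mathcal{V}\cup\mathcal{B}_1: |x_j(t)-x_i(t)|\le\epsilon\}$ (it contains $i$). The update for $i\in\mathcal{V}$ is $x_i^*(t)=|\mathcal{N}(i,x(t))|^{-1}\sum_{j\in\mathcal{N}(i,x(t))}x_j(t)+\xi_i(t+1)$, and $x_i(t+1)=1$ if $x_i^*(t)>1$, $x_i(t+1)=x_i^*(t)$ if $x_i^*(t)\in[0,1]$, $x_i(t+1)=0$ if $x_i^*(t)<0$.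 The noises $\{\xi_i(t)\}_{i\in\mathcal{V},t\ge1}$ are i.i.d. real random variables with $E\xi_1(1)=0$, $E\xi_1(1)^2>0$ and $|\xi_1(1)|\le\delta$ almost surely. *)

(* Defs.v *)
From HB Require Import structures.
From mathcomp Require Import all_boot all_order all_algebra.
From mathcomp Require Import all_classical all_reals all_analysis.
Set Implicit Arguments. Unset Strict Implicit. Unset Printing Implicit Defensive.
Import Order.TTheory GRing.Theory Num.Theory.
Import numFieldNormedType.Exports.
Local Open Scope classical_set_scope.
Local Open Scope ring_scope.

Section HK.
Variable R : realType.

Definition clip01 (y : R) : R := if 1 < y then 1 else if y < 0 then 0 else y.

(* The HK average for regular agent i given the regular opinions x : 'I_n -> R,
   a stubborn set B1 of m agents all holding the opinion b, and confidence eps. *)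
Definition hk_avg (n m : nat) (eps b : R) (x : 'I_n -> R) (i : 'I_n) : R :=
  let inN (y : R) := `|y - x i| <= eps in
  let sumV := \sum_(j < n | inN (x j)) x j in
  let cardV := #|[set j : 'I_n | inN (x j)]| in
  let sumB := \sum_(k < m | inN b) b in
  let cardB := #|[set k : 'I_m | inN b]| in
  (sumV + sumB) / (cardV + cardB)%:R.

(* The trajectory: xi t i = xi_i(t+1) is the noise used in the update t -> t+1. *)
Fixpoint hk_traj (n m : nat) (eps b : R) (x0 : 'I_n -> R)
  (xi : nat -> 'I_n -> R) (t : nat) : 'I_n -> R :=
  match t with
  | 0 => x0
  | t'.+1 => fun i =>
      clip01 (hk_avg m eps b (hk_traj m eps b x0 xi t') i + xi t' i)
  end.

Definition diam (n : nat) (x : 'I_n -> R) : R :=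
  \big[Num.max/0]_(i < n) \big[Num.max/0]_(j < n) `|x i - x j|.
Definition dist_to (n : nat) (x : 'I_n -> R) (b : R) : R :=
  \big[Num.max/0]_(i < n) `|x i - b|.

End HK.

Definition mutually_independent d (T : measurableType d) (R : realType)
  (P : probability T R) (I : eqType) (X : I -> T -> R) : Prop :=
  forall (s : seq I) (B : I -> set R),
    uniq s -> (forall k, measurable (B k)) ->
    P (\bigcap_(k in [set` s]) (X k @^-1` B k)) =
    (\prod_(k <- s) P (X k @^-1` B k))%E.

Definition identically_distributed d (T : measurableType d) (R : realType)
  (P : probability T R) (I : Type) (X : I -> T -> R) : Prop :=
  forall (k l : I) (B : set R), measurable B ->
    P (X k @^-1` B) = P (X l @^-1` B).

(* Main.v *)
Require Import Defs.
From HB Require Import structures.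
From mathcomp Require Import all_boot all_order all_algebra.
From mathcomp Require Import all_classical all_reals all_analysis.
From mathcomp Require Import ring lra measurable_realfun.
Import Order.TTheory GRing.Theory Num.Theory.
Import numFieldNormedType.Exports.
Local Open Scope classical_set_scope.
Local Open Scope ring_scope.

Lemma pow_small (R : realType) (a e : R) : 0 <= a < 1 -> 0 < e ->
  exists N, forall k, (N <= k)%N -> a ^+ k <= e.
Proof.
move=> /andP[a0 a1] e0.
have ha : `|a| < 1 by rewrite ger0_norm.
have := cvg_geometric 1 ha.
move/cvgr0_norm_lt => /(_ e e0) [N _ hN]; exists N => k hk.
by have := hN k hk; rewrite /= mul1r ger0_norm ?exprn_ge0 // => /ltW.
Qed.

Lemma limsup_le (R : realType) (u : R^nat) L C : (forall t, `|u t| <= C) ->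
  (forall e, 0 < e -> exists N, forall t, (N <= t)%N -> u t <= L + e) ->
  limn_sup u <= L.
Proof.
move=> hC hL.
have bu : bounded_fun u.
  rewrite /bounded_near; near=> M => t _ /=.
  apply: le_trans (hC t) _; near: M; apply: nbhs_pinfty_ge; exact: num_real.
rewrite limn_supE //; apply/ler_addgt0Pr => e e0; have [N hN] := hL e e0.
apply: le_trans (ge_inf _ _) _.
- exact: bounded_fun_has_lbound_sups.
- by exists N.
apply: sup_le_ub.
  by exists (u N), N => /=.
by move=> _ [k /= hk <-]; apply: hN.
Unshelve. all: by end_near. Qed.
Section Det.
Variable R : realType.
Variables (n m : nat) (eps b : R).
Hypothesis hm : (0 < m)%N.
Hypothesis hb : 0 <= b <= 1.
Hypothesis heps : 0 < eps.

Local Notation avg := (hk_avg m eps b).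

Lemma clip_ge (y : R) : Num.min y 1 <= clip01 y.
Proof. rewrite /clip01; case: ifP => h1; first by rewrite ge_min lexx orbT.
case: ifP => h2; last by rewrite ge_min lexx.
rewrite ge_min; apply/orP; left; exact: ltW. Qed.

Lemma clip_le (y : R) : clip01 y <= Num.max y 0.
Proof. rewrite /clip01; case: ifP => h1.
  by rewrite le_max ltW.
case: ifP => h2; first by rewrite le_max lexx orbT.
by rewrite le_max lexx. Qed.

Lemma clip_lip (y yp : R) : `|clip01 y - clip01 yp| <= `|y - yp|.
Proof.
have h1 := ler_norm (y - yp). have h2 : yp - y <= `|y - yp| by rewrite distrC ler_norm.
rewrite /clip01; case: (ltP 1 y) => ?; case: (ltP y 0) => ?; case: (ltP 1 yp) => ?; case: (ltP yp 0) => ?;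
  rewrite ler_norml; apply/andP; split; lra.
Qed.

Lemma stub_sum (sb : bool) : \sum_(k < m | sb) b = if sb then m%:R * b else 0.
Proof. case: sb; last by rewrite big_pred0.
by rewrite sumr_const card_ord mulr_natl. Qed.

Lemma cset_card (T : finType) (P : pred T) : #|[set x | P x]| = #|[pred x | P x]|.
Proof. apply: eq_card => x; apply/idP/idP => [/set_mem //|?]; exact: mem_set. Qed.

Lemma stub_card (sb : bool) : #|[set _ : 'I_m | sb]| = if sb then m else 0%N.
Proof. rewrite cset_card; case: sb.
  by rewrite -[RHS]card_ord; apply: eq_card.
by apply: eq_card0.
Qed.

Lemma cardV_gt0 (x : 'I_n -> R) (i : 'I_n) : (0 < #|[set j : 'I_n | (`|x j - x i| <= eps)%R]|)%N.
Proof. by rewrite cset_card; apply/card_gt0P; exists i; rewrite inE /= subrr normr0 ltW. Qed.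

Lemma avg_ge (x : 'I_n -> R) i L :
  (forall j, `|x j - x i| <= eps -> L <= x j) ->
  (`|b - x i| <= eps -> L <= b) -> L <= avg x i.
Proof.
move=> hj hbb; rewrite /hk_avg /= stub_sum stub_card.
have hk := cardV_gt0 x i.
rewrite ler_pdivlMr; last by rewrite ltr0n addn_gt0 hk.
rewrite natrD mulrDr; apply: lerD.
  rewrite cset_card mulr_natr -sumr_const big_mkcond [X in _ <= X]big_mkcond /=; apply: ler_sum => j _.
  by rewrite inE; case: ifP => // /hj.
case: ifP => h; last by rewrite mulr0.
by rewrite mulrC ler_wpM2l ?ler0n ?hbb.
Qed.

Lemma avg_le (x : 'I_n -> R) i U :
  (forall j, `|x j - x i| <= eps -> x j <= U) ->
  (`|b - x i| <= eps -> b <= U) -> avg x i <= U.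
Proof.
move=> hj hbb; rewrite /hk_avg /= stub_sum stub_card.
have hk := cardV_gt0 x i.
rewrite ler_pdivrMr; last by rewrite ltr0n addn_gt0 hk.
rewrite natrD mulrDr; apply: lerD.
  rewrite cset_card mulr_natr -sumr_const big_mkcond [X in _ <= X]big_mkcond /=; apply: ler_sum => j _.
  by rewrite inE; case: ifP => // /hj.
case: ifP => h; last by rewrite mulr0.
by rewrite [U * _]mulrC ler_wpM2l ?ler0n ?hbb.
Qed.

Definition alpha : R := n%:R / (n%:R + 1).

Lemma alpha_ge0 : 0 <= alpha.
Proof. by rewrite /alpha divr_ge0 // ?ler0n // addr_ge0 ?ler0n. Qed.

Lemma alpha_eq : alpha * (n%:R + 1) = n%:R.
Proof. by rewrite /alpha mulfVK // gt_eqF // ltr_pwDr ?ltr01 ?ler0n. Qed.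

Lemma cardV_le (x : 'I_n -> R) (i : 'I_n) : (#|[set j : 'I_n | (`|x j - x i| <= eps)%R]| <= n)%N.
Proof. by rewrite cset_card -[X in (_ <= X)%N]card_ord max_card. Qed.

Lemma alpha_K (k : nat) : (k <= n)%N -> k%:R <= alpha * (k + m)%:R.
Proof.
move=> hk.
have hK : k%:R <= n%:R :> R by rewrite ler_nat.
have hM : 1 <= m%:R :> R by rewrite ler1n.
have h0 : 0 <= n%:R :> R by rewrite ler0n.
have hN : 0 < n%:R + 1 :> R by rewrite ltr_pwDr ?ltr01.
rewrite /alpha natrD mulrAC ler_pdivlMr //; nra.
Qed.

Lemma avg_stub_ge (x : 'I_n -> R) i u : 0 <= u -> `|b - x i| <= eps ->
  (forall j, `|x j - x i| <= eps -> b - u <= x j) -> b - alpha * u <= avg x i.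
Proof.
move=> hu hs hj; rewrite /hk_avg /= stub_sum stub_card hs.
have hk := cardV_gt0 x i. have hkn := cardV_le x i.
have hA := @alpha_K _ hkn. have ha := alpha_ge0.
move: hk hkn hA; set k := #|_| => hk hkn hA.
have hSV : (b - u) * k%:R <= \sum_(j < n | `|x j - x i| <= eps) x j.
  rewrite /k cset_card mulr_natr -sumr_const big_mkcond [X in _ <= X]big_mkcond /=; apply: ler_sum => j _.
  by rewrite inE; case: ifP => // /hj.
rewrite ler_pdivlMr; last by rewrite ltr0n addn_gt0 hk.
move: hA hSV; rewrite !natrD => hA hSV.
have hK : 0 <= k%:R :> R by rewrite ler0n.
nra.
Qed.

Lemma avg_stub_le (x : 'I_n -> R) i u : 0 <= u -> `|b - x i| <= eps ->
  (forall j, `|x j - x i| <= eps -> x j <= b + u) -> avg x i <= b + alpha * u.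
Proof.
move=> hu hs hj; rewrite /hk_avg /= stub_sum stub_card hs.
have hk := cardV_gt0 x i. have hkn := cardV_le x i.
have hA := @alpha_K _ hkn. have ha := alpha_ge0.
move: hk hkn hA; set k := #|_| => hk hkn hA.
have hSV : \sum_(j < n | `|x j - x i| <= eps) x j <= (b + u) * k%:R.
  rewrite /k cset_card mulr_natr -sumr_const big_mkcond [X in _ <= X]big_mkcond /=; apply: ler_sum => j _.
  by rewrite inE; case: ifP => // /hj.
rewrite ler_pdivrMr; last by rewrite ltr0n addn_gt0 hk.
move: hA hSV; rewrite !natrD => hA hSV.
have hK : 0 <= k%:R :> R by rewrite ler0n.
nra.
Qed.

Definition step (x : 'I_n -> R) (z : 'I_n -> R) : 'I_n -> R :=
  fun i => clip01 (avg x i + z i).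

Lemma step_up x z c L : (forall i, c <= z i) -> (forall j, L <= x j) -> L <= b ->
  forall i, Num.min (L + c) 1 <= step x z i.
Proof.
move=> hz hx hL i; apply: le_trans (clip_ge _).
have : L <= avg x i by apply: avg_ge => [j _|_]; [exact: hx|exact: hL].
have := hz i; rewrite le_min !ge_min lexx !orbT andbT => h1 h2.
apply/orP; left; lra.
Qed.

Lemma step_down x z c U : (forall i, z i <= - c) -> (forall j, x j <= U) -> b <= U ->
  forall i, step x z i <= Num.max (U - c) 0.
Proof.
move=> hz hx hL i; apply: le_trans (clip_le _) _.
have : avg x i <= U by apply: avg_le => [j _|_]; [exact: hx|exact: hL].
have := hz i; rewrite ge_max !le_max lexx !orbT andbT => h1 h2.
apply/orP; left; lra.
Qed.

Lemma step_lo x z u d : 0 <= u <= eps -> 0 <= d -> (forall i, - d <= z i) ->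
  (forall j, b - u <= x j) -> forall i, b - (alpha * u + d) <= step x z i.
Proof.
move=> /andP[hu0 hue] hd hz hx i; apply: le_trans (clip_ge _).
have ha := alpha_ge0.
have hb1 : b - (alpha * u + d) <= 1 by case/andP: hb => ? ?; nra.
rewrite le_min hb1 andbT.
suff : b - alpha * u <= avg x i by have := hz i; lra.
have [hs|hs] := leP (`|b - x i|) eps.
  by apply: avg_stub_ge => // j _; exact: hx.
have hxi := hx i.
have hxi' : b + eps < x i.
  move: hs; rewrite ltr_normr => /orP[]; lra.
have : b <= avg x i.
  apply: avg_ge => [j|]; last by rewrite leNgt hs.
  by rewrite ler_norml => /andP[? ?]; lra.
nra.
Qed.

Lemma step_hi x z u d : 0 <= u <= eps -> 0 <= d -> (forall i, z i <= d) ->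
  (forall j, x j <= b + u) -> forall i, step x z i <= b + (alpha * u + d).
Proof.
move=> /andP[hu0 hue] hd hz hx i; apply: le_trans (clip_le _) _.
have ha := alpha_ge0.
have hb1 : 0 <= b + (alpha * u + d) by case/andP: hb => ? ?; nra.
rewrite ge_max hb1 andbT.
suff : avg x i <= b + alpha * u by have := hz i; lra.
have [hs|hs] := leP (`|b - x i|) eps.
  by apply: avg_stub_le => // j _; exact: hx.
have hxi := hx i.
have hxi' : x i < b - eps.
  move: hs; rewrite ltr_normr => /orP[]; lra.
have : avg x i <= b.
  apply: avg_le => [j|]; last by rewrite leNgt hs.
  by rewrite ler_norml => /andP[? ?]; lra.
nra.
Qed.

Lemma avg_all (x : 'I_n -> R) i : (forall j, `|x j - b| <= eps / 2) ->
  avg x i = (\sum_(j < n) x j + m%:R * b) / (n + m)%:R.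
Proof.
move=> hx.
have hall : forall j, `|x j - x i| <= eps.
  move=> j; have := hx j; have := hx i; rewrite !ler_norml => /andP[? ?] /andP[? ?].
  apply/andP; split; lra.
have hs : `|b - x i| <= eps.
  have := hx i; rewrite distrC ler_norml => /andP[? ?].
  rewrite ler_norml; apply/andP; split; lra.
rewrite /hk_avg /= stub_sum stub_card hs cset_card.
rewrite (eq_bigl xpredT); last by move=> j; rewrite hall.
congr (_ / (_ + _)%:R); rewrite -[RHS]card_ord; apply: eq_card => j.
by rewrite inE /= hall.
Qed.

Lemma step_cons x z : (forall j, `|x j - b| <= eps / 2) ->
  forall i j, `|step x z i - step x z j| <= `|z i - z j|.
Proof.
move=> hx i j; rewrite /step (@avg_all x i hx) (@avg_all x j hx).
apply: le_trans (clip_lip _ _) _.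
by rewrite opprD addrACA subrr add0r.
Qed.

Local Notation traj := (hk_traj m eps b).

Lemma trajS (x0 : 'I_n -> R) (z : nat -> 'I_n -> R) t : traj x0 z t.+1 = step (traj x0 z t) (z t).
Proof. by []. Qed.

Lemma clip01_01 (y : R) : 0 <= clip01 y <= 1.
Proof. rewrite /clip01; case: ifP => h1; first by rewrite ler01 lexx.
case: ifP => h2; first by rewrite lexx ler01.
by rewrite leNgt h2 leNgt h1. Qed.

Lemma traj01 (x0 : 'I_n -> R) (z : nat -> 'I_n -> R) : (forall i, 0 <= x0 i <= 1) -> forall t i, 0 <= traj x0 z t i <= 1.
Proof. by move=> h [|t] i //=; exact: clip01_01. Qed.

Lemma steer (x0 : 'I_n -> R) (z : nat -> 'I_n -> R) d c K t0 : 0 < c -> 0 <= d -> alpha * eps + d <= eps ->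
  1 <= K%:R * c -> (forall i, 0 <= x0 i <= 1) ->
  (forall s i, (s < K)%N -> c <= z (t0 + s)%N i) ->
  (forall s i, (s < K)%N -> - d <= z (t0 + K + s)%N i <= - c) ->
  forall i, `|traj x0 z (t0 + K + K)%N i - b| <= eps.
Proof.
move=> c0 d0 hd hK h01 hup hdn.
have ha := alpha_ge0. case/andP: hb => b0 b1.
have up : forall s, (s <= K)%N -> forall i, Num.min (s%:R * c) b <= traj x0 z (t0 + s)%N i.
  elim=> [|s IH] hs i.
    rewrite addn0 mul0r; have := traj01 x0 z h01 t0 i => /andP[? _].
    by rewrite ge_min; apply/orP; left.
  rewrite addnS trajS.
  apply: le_trans (@step_up _ (z (t0 + s)%N) c _ _ (IH (ltnW hs)) _ i).
  - rewrite le_min !ge_min; apply/andP; split; last by rewrite b1 orbT.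
    case: (leP (s%:R * c) b) => hsb; apply/orP; [left|right]; rewrite -?natr1; nra.
  - by move=> j; apply: hup.
  - by rewrite ge_min lexx orbT.
have upK : forall i, b <= traj x0 z (t0 + K)%N i.
  move=> i; have := up K (leqnn K) i; have -> // : Num.min (K%:R * c) b = b.
  by apply/min_idPr; lra.
have dn : forall s, (s <= K)%N -> forall i,
    (traj x0 z (t0 + K + s)%N i <= Num.max (1 - s%:R * c) b) /\ (b - eps <= traj x0 z (t0 + K + s)%N i).
  elim=> [|s IH] hs.
    move=> i; rewrite addn0 mul0r subr0; split.
      by have := traj01 x0 z h01 (t0 + K) i => /andP[_ ?]; rewrite le_max; apply/orP; left.
    by have := upK i; have := heps; lra.
  have IH' := IH (ltnW hs).
  move=> i; rewrite addnS trajS; split.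
    apply: le_trans (@step_down _ (z (t0 + K + s)%N) c _ _ (fun j => (IH' j).1) _ i) _.
    - by move=> j; have := hdn s j hs; case/andP.
    - by rewrite le_max lexx orbT.
    rewrite ge_max !le_max; apply/andP; split; last by rewrite b0 orbT.
    rewrite -natr1 /Num.max; case: ltP => h2; apply/orP; [right|left]; lra.
  apply: le_trans (_ : b - (alpha * eps + d) <= _); first lra.
  apply: step_lo => //.
  - by rewrite lexx ltW.
  - by move=> j; have := hdn s j hs; case/andP.
  - by move=> j; exact: (IH' j).2.
move=> i; have [h1 h2] := dn K (leqnn K) i.
have : Num.max (1 - K%:R * c) b = b by apply/max_idPr; lra.
move=> e; rewrite e in h1; rewrite ler_norml; apply/andP; split; lra.
Qed.

Lemma alpha_lt1 : alpha < 1.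
Proof. have := alpha_eq; have := alpha_ge0; have h0 : 0 <= n%:R :> R by rewrite ler0n. nra. Qed.

Lemma tail (x0 : 'I_n -> R) (z : nat -> 'I_n -> R) d T : 0 <= d -> alpha * eps + d <= eps ->
  (forall t i, `|z t i| <= d) -> (forall i, `|traj x0 z T i - b| <= eps) ->
  forall s i, `|traj x0 z (T + s)%N i - b| <= (n%:R + 1) * d + alpha ^+ s * (eps - (n%:R + 1) * d).
Proof.
move=> d0 hd hz hT.
have ha := alpha_ge0. have ha1 := alpha_lt1. have hae := alpha_eq.
have h0 : 0 <= n%:R :> R by rewrite ler0n.
have hw : 0 <= eps - (n%:R + 1) * d by nra.
elim=> [|s IH] i.
  by rewrite addn0 expr0 mul1r; have := hT i; lra.
have hs1 : alpha ^+ s <= 1 by rewrite exprn_ile1 // ltW.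
have hs0 : 0 <= alpha ^+ s by rewrite exprn_ge0.
set e := (n%:R + 1) * d + alpha ^+ s * (eps - (n%:R + 1) * d).
have he : 0 <= e <= eps by apply/andP; split; rewrite /e; nra.
have eq : alpha * e + d = (n%:R + 1) * d + alpha ^+ s.+1 * (eps - (n%:R + 1) * d).
  by rewrite /e exprS mulrDr [alpha * (_ * d)]mulrA hae; ring.
rewrite addnS trajS -eq ler_norml; apply/andP; split.
  suff : b - (alpha * e + d) <= step (traj x0 z (T + s)) (z (T + s)%N) i by lra.
  apply: step_lo => // [j|j]; first by have := hz (T + s)%N j; rewrite ler_norml => /andP[].
  by have := IH j; rewrite /e ler_norml => /andP[? ?]; lra.
suff : step (traj x0 z (T + s)) (z (T + s)%N) i <= b + (alpha * e + d) by lra.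
apply: step_hi => // [j|j]; first by have := hz (T + s)%N j; rewrite ler_norml => /andP[].
by have := IH j; rewrite /e ler_norml => /andP[? ?]; lra.
Qed.

Lemma bigmax01 (I : finType) (F : I -> R) : (forall i, 0 <= F i <= 1) ->
  `|\big[Num.max/0]_(i : I) F i| <= 1.
Proof.
move=> hF; have : 0 <= \big[Num.max/0]_(i : I) F i <= 1.
  apply: (big_ind (fun v => 0 <= v <= 1)) => //; first by rewrite lexx ler01.
  move=> u v /andP[u0 u1] /andP[v0 v1]; rewrite le_max u0 ge_max u1 v1 //.
by case/andP => h0 h1; rewrite ger0_norm.
Qed.

Lemma det_main (x0 : 'I_n -> R) (z : nat -> 'I_n -> R) d T : (forall i, 0 <= x0 i <= 1) ->
  0 < d -> d < eps / (2 * (n%:R + 1)) ->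
  (forall t i, `|z t i| <= d) -> (forall i, `|traj x0 z T i - b| <= eps) ->
  limn_sup (fun t => diam (traj x0 z t)) <= 2 * d /\
  limn_sup (fun t => dist_to (traj x0 z t) b) <= (n%:R + 1) * d.
Proof.
move=> h01 d0 hdl hz hT.
have ha := alpha_ge0. have ha1 := alpha_lt1. have hae := alpha_eq.
have h0 : 0 <= n%:R :> R by rewrite ler0n.
have hN : 0 < n%:R + 1 :> R by rewrite ltr_pwDr ?ltr01.
have hd2 : (n%:R + 1) * d < eps / 2.
  move: hdl; rewrite ltr_pdivlMr ?mulr_gt0 // => h; rewrite ltr_pdivlMr //; nra.
have hd : alpha * eps + d <= eps by nra.
set w := eps - (n%:R + 1) * d.
have hw : 0 < w by rewrite /w; nra.
have ht := @tail x0 z d T (ltW d0) hd hz hT.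
have hx01 := traj01 x0 z h01.
have hb01 := hb; case/andP: hb => b0 b1.
split.
  apply: (@limsup_le R _ _ 1).
    move=> t; apply: bigmax01 => i; apply/andP; split.
      apply: (big_ind (fun v => 0 <= v)) => //; first by move=> u v u0 v0; rewrite le_max u0.
    apply: bigmax_le => // j _; have := hx01 t i; have := hx01 t j.
    move=> /andP[? ?] /andP[? ?]; rewrite ler_norml; apply/andP; split; lra.
  move=> e e0.
  have [N0 hN0] := @pow_small R alpha ((eps / 2 - (n%:R + 1) * d) / w) (ltac:(by rewrite ha ha1))
    (ltac:(by rewrite divr_gt0 // subr_gt0)).
  exists (T + N0).+1 => t ht'; rewrite /diam.
  case: t ht' => // t; rewrite ltnS => ht'.
  have -> : t = (T + (t - T))%N by rewrite subnKC // (leq_trans (leq_addr N0 T)).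
  have hs : (N0 <= t - T)%N by rewrite leq_subRL // (leq_trans (leq_addr N0 T)).
  have hall : forall j, `|traj x0 z (T + (t - T)) j - b| <= eps / 2.
    move=> j; apply: le_trans (ht _ j) _.
    have := hN0 _ hs; rewrite ler_pdivlMr // => hh; rewrite /w in hh; lra.
  apply: bigmax_le; first by have := e0; lra.
  move=> i _; apply: bigmax_le; first by have := e0; lra.
  move=> j _; rewrite trajS; apply: le_trans (@step_cons _ (z (T + (t - T))%N) hall i j) _.
  apply: le_trans (ler_normB _ _) _.
  have := hz (T + (t - T))%N i; have := hz (T + (t - T))%N j; lra.
apply: (@limsup_le R _ _ 1).
  move=> t; apply: bigmax01 => i; have := hx01 t i => /andP[? ?].
  by rewrite normr_ge0 /= ler_norml; apply/andP; split; lra.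
move=> e e0.
have [N0 hN0] := @pow_small R alpha (e / w) (ltac:(by rewrite ha ha1))
    (ltac:(by rewrite divr_gt0)).
exists (T + N0)%N => t ht'.
have -> : t = (T + (t - T))%N by rewrite subnKC // (leq_trans (leq_addr N0 T)).
have hs : (N0 <= t - T)%N by rewrite leq_subRL // (leq_trans (leq_addr N0 T)).
apply: bigmax_le; first by rewrite addr_ge0 // ?mulr_ge0 // ?ltW.
move=> i _; apply: le_trans (ht _ i) _.
have := hN0 _ hs; rewrite ler_pdivlMr // => hh; rewrite /w in hh; lra.
Qed.

Lemma alpha_d d : 0 <= d -> d < eps / (2 * (n%:R + 1)) -> alpha * eps + d <= eps.
Proof.
move=> d0 hdl.
have ha := alpha_ge0. have hae := alpha_eq.
have h0 : 0 <= n%:R :> R by rewrite ler0n.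
have hN : 0 < n%:R + 1 :> R by rewrite ltr_pwDr ?ltr01.
have hd2 : (n%:R + 1) * d < eps / 2.
  move: hdl; rewrite ltr_pdivlMr ?mulr_gt0 // => h; rewrite ltr_pdivlMr //; nra.
rewrite -(ler_pM2l hN) mulrDr mulrA [_ * alpha]mulrC hae; nra.
Qed.

End Det.




Lemma pos_tail (R : realType) (d : measure_display) (T : measurableType d)
  (P : probability T R) (Y : T -> R) (mY : measurable_fun setT Y) (dl : R) :
  0 <= dl ->
  (\forall w \ae P, `|Y w| <= dl) ->
  (\int[P]_w ((EFin \o Y)^\+ w) = \int[P]_w ((EFin \o Y)^\- w))%E ->
  (0 < \int[P]_w ((Y w) ^+ 2)%:E)%E ->
  exists c, 0 < c /\ (0 < P (Y @^-1` `[c, +oo[))%E.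
Proof.
move=> dl0 hb heq h2; apply: contrapT => hn.
have H : forall k : nat, P (Y @^-1` `[k.+1%:R^-1, +oo[) = 0%E.
  move=> k; apply/eqP; rewrite eq_le measure_ge0 andbT leNgt; apply/negP => hp.
  by apply: hn; exists k.+1%:R^-1; split => //; rewrite invr_gt0 ltr0n.
have mYE := (measurable_EFinP setT Y).2 mY.
have hneg : \forall w \ae P, Y w <= 0.
  apply: (negligibleS _ (negligible_bigcup (F := fun k => Y @^-1` `[k.+1%:R^-1, +oo[) _)).
    move=> w /= /negP; rewrite -ltNge => hw.
    exists (Num.Def.trunc (Y w)^-1) => //=.
    rewrite in_itv /= andbT -(invrK (Y w)) lef_pV2 ?posrE ?invr_gt0 ?ltr0n //.
    by rewrite invrK; exact: ltW (truncnS_gt _).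
  move=> k; exists (Y @^-1` `[k.+1%:R^-1, +oo[); split; [|exact: H k|by []].
  by rewrite -[X in measurable X]setTI; apply: mY => //; exact: measurable_itv.
have hp0 : (\int[P]_w ((EFin \o Y)^\+ w) = 0)%E.
  apply/eqP; rewrite eq_le; apply/andP; split; last by apply: integral_ge0 => w _; exact: funepos_ge0.
  rewrite -(integral0 P setT); apply: ae_ge0_le_integral => //.
  - exact: measurable_funepos.
  apply: filterS hneg => w hw _; rewrite funeposE /= /cst.
  by rewrite ge_max lexx andbT lee_fin.
have hsq : (\int[P]_w ((Y w) ^+ 2)%:E <= \int[P]_w (dl%:E * (EFin \o Y)^\- w))%E.
  apply: ae_ge0_le_integral => //.
  - by move=> w _; rewrite lee_fin sqr_ge0.
  - by apply/measurable_EFinP; exact: measurable_funX.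
  - by move=> w _; rewrite mule_ge0 // funeneg_ge0.
  - by apply: measurable_funeM; exact: measurable_funeneg.
  apply: filterS2 hneg hb => w hw hw2 _; rewrite funenegE /= maxEle.
  have := hw2; rewrite ler_norml => /andP[h1 h3].
  case: ifP => h; first by rewrite mule0 lee_fin expr2; move: h; rewrite lee_fin oppr_le0 => h; nra.
  by rewrite -EFinM lee_fin expr2; move: h; rewrite lee_fin oppr_le0 => /negbT; rewrite -ltNge => h; nra.
have := lt_le_trans h2 hsq.
rewrite ge0_integralZl //; last exact: measurable_funeneg.
by rewrite -heq hp0 mule0 ltxx.
Qed.

Lemma sube0_eq (R : realType) (a b : \bar R) : (a - b = 0)%E -> a = b.
Proof.
by case: a => [a||]; case: b => [b||] //= /eqP; rewrite ?eqe // subr_eq0 => /eqP ->.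
Qed.

Section Indep.
Variables (R : realType) (d : measure_display) (T : measurableType d) (P : probability T R).
Variable n : nat.
Variable X : nat * 'I_n -> T -> R.
Variable B : nat * 'I_n -> set R.
Hypothesis mXB : forall k, measurable (X k @^-1` B k).
Hypothesis hind : forall s, uniq s -> P (\bigcap_(k in [set` s]) (X k @^-1` B k)) =
    (\prod_(k <- s) P (X k @^-1` B k))%E.

Definition PE (s : seq (nat * 'I_n)) : set T := \bigcap_(k in [set` s]) (X k @^-1` B k).

Lemma PE_nil : PE [::] = setT.
Proof. by apply/seteqP; split => w // _ k /=; rewrite in_nil. Qed.

Lemma PE_cat s t : PE (s ++ t) = PE s `&` PE t.
Proof.
apply/seteqP; split => w.
  by move=> h; split => k hk; apply: h => /=; rewrite mem_cat hk ?orbT.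
by move=> [h1 h2] k /=; rewrite mem_cat => /orP[hk|hk]; [exact: h1|exact: h2].
Qed.

Lemma PE_cons k s : PE (k :: s) = X k @^-1` B k `&` PE s.
Proof.
apply/seteqP; split => w.
  by move=> h; split; [apply: h; rewrite /= mem_head|move=> j hj; apply: h; rewrite /= in_cons hj orbT].
by move=> [h1 h2] j /=; rewrite in_cons => /orP[/eqP ->|hj] //; exact: h2.
Qed.

Lemma PE_meas s : measurable (PE s).
Proof. elim: s => [|k s IH]; first by rewrite PE_nil.
by rewrite PE_cons; apply: measurableI. Qed.

Lemma PE_mul s t : uniq (s ++ t) -> P (PE (s ++ t)) = (P (PE s) * P (PE t))%E.
Proof.
move=> u; have := u; rewrite cat_uniq => /and3P[us _ ut].
by rewrite /PE hind // big_cat /= -hind // -hind.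
Qed.

Variable L : nat.
Definition blk (N : nat) : seq (nat * 'I_n) := [seq ((L * N + s)%N, i) | s <- iota 0 L, i <- enum 'I_n].

Lemma blk_uniq N : uniq (blk N).
Proof.
rewrite /blk allpairs_uniq ?iota_uniq ?enum_uniq //.
by move=> [a i] [b j] _ _ /= [/addnI -> ->].
Qed.

Lemma mem_blk N j : (j \in blk N) = (L * N <= j.1 < L * N + L)%N.
Proof.
apply/allpairsP/idP.
  by move=> [[s i] /= [hs _ ->]]; move: hs; rewrite mem_iota add0n /= leq_addr ltn_add2l.
case: j => t i /= /andP[h1 h2]; exists (t - L * N, i)%N => /=; split.
- by rewrite mem_iota add0n ltn_subLR // addnC.
- by rewrite mem_enum.
- by rewrite subnKC.
Qed.

Fixpoint FF (N : nat) : set T := if N is N'.+1 then FF N' `&` ~` PE (blk N') else setT.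

Lemma FF_meas N : measurable (FF N).
Proof. elim: N => [|N IH] //=; apply: measurableI => //; apply: measurableC; exact: PE_meas. Qed.

Variable qr : R.
Hypothesis hq : forall N, P (PE (blk N)) = qr%:E.

Lemma fin_P (A : set T) : measurable A -> P A = (fine (P A))%:E.
Proof. by move=> mA; rewrite fineK // fin_num_measure. Qed.

Lemma FF_prob N : forall s, uniq s -> (forall j, j \in s -> L * N <= j.1)%N ->
  P (FF N `&` PE s) = (((1 - qr) ^+ N)%:E * P (PE s))%E.
Proof.
elim: N => [|N IH] s us hs.
  by rewrite /= setTI expr0 mul1e.
rewrite /= -setIA (setIC (~` _)) setIA -setDE.
have mA : measurable (FF N `&` PE s) by apply: measurableI; [exact: FF_meas|exact: PE_meas].
rewrite measureD //; [|exact: PE_meas|by apply: (le_lt_trans (probability_le1 P mA)); rewrite ltry].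
have us' : uniq (s ++ blk N).
  rewrite cat_uniq us blk_uniq andbT; apply/hasPn => j /=; rewrite mem_blk => /andP[_ h].
  apply/negP => /hs; rewrite mulnS addnC leqNgt h.
  by [].
rewrite -setIA -PE_cat.
have hs1 : forall j, j \in s -> (L * N <= j.1)%N.
  by move=> j /hs; apply: leq_trans; rewrite leq_mul2l leqnSn orbT.
rewrite [X in (_ - X)%E](_ : _ = (((1 - qr) ^+ N)%:E * P (PE (s ++ blk N)))%E); last first.
  apply: IH => // j; rewrite mem_cat => /orP[/hs1 //|]; by rewrite mem_blk => /andP[].
rewrite [X in (X - _)%E](_ : _ = (((1 - qr) ^+ N)%:E * P (PE s))%E); last exact: IH.
rewrite PE_mul // hq (@fin_P _ (PE_meas s)) -!EFinM -EFinB; congr (_%:E).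
by rewrite exprS; ring.
Qed.

Lemma G_sub N : \bigcap_k ~` PE (blk k) `<=` FF N.
Proof. elim: N => [|N IH] //= w hw; split; [exact: IH|exact: hw]. Qed.

Lemma G_meas : measurable (\bigcap_k ~` PE (blk k)).
Proof. by apply: bigcapT_measurable => k; apply: measurableC; exact: PE_meas. Qed.

Lemma G_null : 0 < qr -> P (\bigcap_k ~` PE (blk k)) = 0%E.
Proof.
move=> q0.
have q1 : qr <= 1.
  by have := probability_le1 P (PE_meas (blk 0)); rewrite hq lee_fin.
apply/eqP; rewrite eq_le measure_ge0 andbT (@fin_P _ G_meas) lee_fin.
apply/ler_addgt0Pr => e e0; rewrite add0r.
have [N hN] := @pow_small R (1 - qr) e (ltac:(apply/andP; split; lra)) e0.
apply: le_trans (hN N (leqnn N)).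
have := @le_measure _ _ _ P _ _ (mem_set G_meas) (mem_set (FF_meas N)) (G_sub N).
have hF : (P (FF N) <= ((1 - qr) ^+ N)%:E)%E.
  have hF : P (FF N `&` PE [::]) = (((1 - qr) ^+ N)%:E * P (PE [::]))%E by apply: FF_prob.
  by move: hF; rewrite PE_nil setIT probability_setT mule1 => ->.
move=> hle; have := fine_le _ _ (le_trans hle hF); apply => //.
exact: fin_num_measure G_meas.
Qed.

End Indep.

Theorem theorem1 (R : realType) (d : measure_display) (T : measurableType d)
  (P : probability T R)
  (n m : nat) (hn : (0 < n)%N) (hm : (0 < m)%N)
  (B1 eps delta : R) (hB1 : 0 <= B1 <= 1) (heps : 0 < eps <= 1)
  (x0 : 'I_n -> R) (hx0 : forall i, 0 <= x0 i <= 1)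
  (xi : nat -> 'I_n -> {RV P >-> R})
  (hind : mutually_independent P (fun k : nat * 'I_n => (xi k.1 k.2 : T -> R)))
  (hid : identically_distributed P (fun k : nat * 'I_n => (xi k.1 k.2 : T -> R)))
  (hmean : forall t i, (\int[P]_w (xi t i w)%:E = 0)%E)
  (hvar : forall t i, (0 < \int[P]_w ((xi t i w) ^+ 2)%:E)%E)
  (hdelta : 0 < delta < eps / (2 * (n%:R + 1)))
  (hbound : forall t i, {ae P, forall w, `|xi t i w| <= delta}) :
  {ae P, forall w,
    let x := fun t => hk_traj m eps B1 x0 (fun s j => xi s j w) t in
    limn_sup (fun t => diam (x t)) <= 2 * delta /\
    limn_sup (fun t => dist_to (x t) B1) <= (n%:R + 1) * delta}.
Proof.
case/andP: hdelta => dl0 dlt; case/andP: heps => eps0 eps1.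
pose i0 : 'I_n := Ordinal hn.
pose X0 : T -> R := xi 0%N i0.
have mX0 : measurable_fun setT X0 := measurable_funP (xi 0%N i0).
have hb0 : \forall w \ae P, `|X0 w| <= delta := hbound 0%N i0.
have heq0 : (\int[P]_w ((EFin \o X0)^\+ w) = \int[P]_w ((EFin \o X0)^\- w))%E.
  by apply: sube0_eq; rewrite -integralE; exact: hmean.
have h20 := hvar 0%N i0.
have [c1 [c10 hc1]] := @pos_tail _ _ _ P X0 mX0 delta (ltW dl0) hb0 heq0 h20.
pose X1 : T -> R := fun w => - X0 w.
have mX1 : measurable_fun setT X1 := measurable_funN mX0.
have hb1 : \forall w \ae P, `|X1 w| <= delta by apply: filterS hb0 => w; rewrite normrN.
have heq1 : (\int[P]_w ((EFin \o X1)^\+ w) =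
             \int[P]_w ((EFin \o X1)^\- w))%E.
  have -> : (EFin \o X1) = (fun w => oppe ((EFin \o X0) w)) by apply/funext => w /=; rewrite EFinN.
  by rewrite (funeposN (EFin \o X0)) (funenegN (EFin \o X0)) heq0.
have h21 : (0 < \int[P]_w ((X1 w) ^+ 2)%:E)%E.
  by rewrite (eq_integral (fun w => (X0 w ^+ 2)%:E)) // => w _; rewrite sqrrN.
have [c2 [c20 hc2]] := @pos_tail _ _ _ P _ mX1 delta (ltW dl0) hb1 heq1 h21.
pose c := Num.min c1 c2.
have c0 : 0 < c by rewrite lt_min c10 c20.
have mpre : forall t i (A : set R), measurable A -> measurable ((xi t i : T -> R) @^-1` A).
  by move=> t i A mA; exact: (@measurable_funPTI _ _ _ _ (xi t i) _ mA).
have pu0 : (0 < P (X0 @^-1` `[c, +oo[))%E.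
  apply: (lt_le_trans hc1); apply: le_measure.
  - by apply: mem_set; apply: mpre; exact: measurable_itv.
  - by apply: mem_set; apply: mpre; exact: measurable_itv.
  move=> w /=; rewrite !in_itv /= !andbT => h; apply: le_trans h; rewrite ge_min lexx //.
have pd0 : (0 < P (X0 @^-1` `]-oo, (- c)%R]))%E.
  apply: (lt_le_trans hc2); apply: le_measure.
  - apply: mem_set; rewrite -[X in measurable X]setTI; apply: mX1 => //; exact: measurable_itv.
  - by apply: mem_set; apply: mpre; exact: measurable_itv.
  move=> w /=; rewrite !in_itv /= !andbT /X1 => h.
  have : c <= c2 by rewrite ge_min lexx orbT.
  lra.
pose K := (Num.Def.trunc c^-1).+1.
have hK : 1 <= K%:R * c.
  by rewrite -ler_pdivrMr // div1r; exact: ltW (truncnS_gt _).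
pose L := (K + K)%N.
pose Bf : nat * 'I_n -> set R := fun k => if (k.1 %% L < K)%N then `[c, +oo[%classic else `]-oo, - c]%classic.
pose Xf : nat * 'I_n -> T -> R := fun k => xi k.1 k.2.
have mB : forall k, measurable (Bf k) by move=> k; rewrite /Bf; case: ifP => _; exact: measurable_itv.
have mXB : forall k, measurable (Xf k @^-1` Bf k) by move=> k; exact: mpre.
have hind' : forall s, uniq s -> P (\bigcap_(k in [set` s]) (Xf k @^-1` Bf k)) =
    (\prod_(k <- s) P (Xf k @^-1` Bf k))%E.
  by move=> s us; exact: hind.
have hfac : forall N s i, P (Xf ((L * N + s)%N, i) @^-1` Bf ((L * N + s)%N, i)) =
                          P (Xf (s, i) @^-1` Bf (s, i)).
  move=> N s i; have -> : Bf ((L * N + s)%N, i) = Bf (s, i) by rewrite /Bf /= mulnC modnMDl.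
  exact: hid.
pose Q := (\prod_(s <- iota 0 L) \prod_(i <- enum 'I_n) P (Xf (s, i) @^-1` Bf (s, i)))%E.
have hQ : forall N, P (@PE R d T n Xf Bf (blk n L N)) = Q.
  move=> N; rewrite /PE hind' ?blk_uniq // /blk big_allpairs_dep.
  by apply: eq_bigr => s _; apply: eq_bigr => i _; exact: hfac.
have Qfin : Q = (fine Q)%:E.
  rewrite -(hQ 0%N) fineK //; apply: fin_num_measure; exact: PE_meas.
pose qr := fine Q.
have hq : forall N, P (@PE R d T n Xf Bf (blk n L N)) = qr%:E by move=> N; rewrite hQ.
have Q0 : (0 < Q)%E.
  apply: (big_ind (fun x => 0 < x)%E) => //; first by move=> x y; exact: mule_gt0.
  move=> s _; apply: (big_ind (fun x => 0 < x)%E) => //; first by move=> x y; exact: mule_gt0.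
  move=> i _; rewrite /Bf /=; case: ifP => _.
    by rewrite (hid _ (0%N, i0)) //; exact: measurable_itv.
  by rewrite (hid _ (0%N, i0)) //; exact: measurable_itv.
have qr0 : 0 < qr by rewrite -lte_fin -Qfin.
have Gnull := @G_null R d T P n Xf Bf mXB hind' L qr hq qr0.
have hG : \forall w \ae P, ~ (\bigcap_k ~` @PE R d T n Xf Bf (blk n L k)) w.
  exists (\bigcap_k ~` @PE R d T n Xf Bf (blk n L k)); split => //.
    exact: G_meas.
  by move=> w /= /contrapT.
have hO : \forall w \ae P, forall t i, `|xi t i w| <= delta.
  apply: ae_foralln => t; apply: filter_forall => i; exact: hbound.
apply: filterS2 hO hG => w hw hGw.
have [N hN] : exists N, @PE R d T n Xf Bf (blk n L N) w.
  apply: contrapT => hne; apply: hGw => k _ hk; apply: hne; exists k.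
  exact: hk.
pose z := fun s j => (xi s j w : R).
pose t0 := (L * N)%N.
have hmem : forall s i, (s < L)%N -> Bf ((t0 + s)%N, i) (xi (t0 + s)%N i w).
  move=> s i hs; apply: (hN ((t0 + s)%N, i)) => /=.
  by rewrite mem_blk /= leq_addr ltn_add2l.
have hmod : forall s, (s < L)%N -> ((t0 + s) %% L = s)%N.
  by move=> s hs; rewrite /t0 mulnC modnMDl modn_small.
have hup : forall s i, (s < K)%N -> c <= z (t0 + s)%N i.
  move=> s i hs; have hsL : (s < L)%N by rewrite /L ltn_addr.
  have := hmem s i hsL; rewrite /Bf /= hmod // hs /=.
  by rewrite in_itv /= andbT.
have hdn : forall s i, (s < K)%N -> - delta <= z (t0 + K + s)%N i <= - c.
  move=> s i hs; have hsL : (K + s < L)%N by rewrite /L ltn_add2l.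
  have := hmem (K + s)%N i hsL; rewrite /Bf /= hmod // ltnNge leq_addr /= in_itv /=.
  rewrite -addnA => h; rewrite h andbT /z.
  by have := hw (t0 + (K + s))%N i; rewrite ler_norml => /andP[].
have hd := @alpha_d R n eps delta (ltW dl0) dlt.
have hT := @steer R n m eps B1 hm hB1 eps0 x0 z delta c K t0 c0 (ltW dl0) hd hK hx0 hup hdn.
exact: (@det_main R n m eps B1 hm hB1 eps0 x0 z delta (t0 + K + K)%N hx0 dl0 dlt hw hT).
Qed.
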